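(* Let $\eta\in(0,1)$ and let $\mathbf{u}\in\mathbb{R}^{d_x}$, $\mathbf{v}\in\mathbb{R}^{d_y}$ be nonzero. If $\mathrm{align}((\mathbf{u},\mathbf{v});(\mathbf{u}^*,\mathbf{v}^* ))\ge1-\frac\eta8$, then $\frac{\mathbf{u}^\top\Sigma_{xy}\mathbf{v}}{\sqrt{\mathbf{u}^\top\Sigma_{xx}\mathbf{u}}\sqrt{\mathbf{v}^\top\Sigma_{yy}\mathbf{v}}}\ge\rho_1(1-\eta)$.
   Context: $\mathbf{x}\in\mathbb{R}^{d_x}$, $\mathbf{y}\in\mathbb{R}^{d_y}$ are zero-mean random vectors with $\Sigma_{xx}=\mathbb{E}\mathbf{x}\mathbf{x}^\top$, $\Sigma_{yy}=\mathbb{E}\mathbf{y}\mathbf{y}^\top$ positive definite and $\Sigma_{xy}=\mathbb{E}\mathbf{x}\mathbf{y}^\top$. $\mathbf{T}=\Sigma_{xx}^{-1/2}\Sigma_{xy}\Sigma_{yy}^{-1/2}$ has largest singular value $\rho_1$ with unit top left/right singular vectors $(\mathbf{a}_1,\mathbf{b}_1)$ (assumed unique up to a common sign, i.e. $\rho_1>\rho_2$), and $(\mathbf{u}^*,\mathbf{v}^* )=(\Sigma_{xx}^{-1/2}\mathbf{a}_1,\Sigma_{yy}^{-1/2}\mathbf{b}_1)$. For nonzero $\mathbf{u},\mathbf{v}$, $\mathrm{align}((\mathbf{u},\mathbf{v});(\mathbf{u}^*,\mathbf{v}^* )):=\frac12\big(\frac{\mathbf{u}^\top\Sigma_{xx}\mathbf{u}^*}{\|\Sigma_{xx}^{1/2}\mathbf{u}\|}+\frac{\mathbf{v}^\top\Sigma_{yy}\mathbf{v}^*}{\|\Sigma_{yy}^{1/2}\mathbf{v}\|}\big)$.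 *)

(* Defs.v *)
From HB Require Import structures.
From mathcomp Require Import all_boot all_order all_algebra.
From mathcomp Require Import reals.
Set Implicit Arguments. Unset Strict Implicit. Unset Printing Implicit Defensive.
Import Order.TTheory GRing.Theory Num.Theory.
Local Open Scope ring_scope.

Definition bil {R : realType} {m n : nat} (u : 'cV[R]_m) (A : 'M[R]_(m, n))
  (v : 'cV[R]_n) : R := (u^T *m A *m v) 0 0.

Definition vnorm {R : realType} {m : nat} (w : 'cV[R]_m) : R :=
  Num.sqrt ((w^T *m w) 0 0).

Definition symmetric {R : realType} {n : nat} (A : 'M[R]_n) : Prop := A^T = A.

Definition posdef {R : realType} {n : nat} (A : 'M[R]_n) : Prop :=
  symmetric A /\ forall w : 'cV[R]_n, w != 0 -> 0 < bil w A w.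

Definition possemidef {R : realType} {n : nat} (A : 'M[R]_n) : Prop :=
  symmetric A /\ forall w : 'cV[R]_n, 0 <= bil w A w.

Definition is_psd_sqrt {R : realType} {n : nat} (A S : 'M[R]_n) : Prop :=
  posdef S /\ S *m S = A.

Definition singular_triple {R : realType} {m n : nat} (T : 'M[R]_(m, n))
  (s : R) (a : 'cV[R]_m) (b : 'cV[R]_n) : Prop :=
  0 <= s /\ vnorm a = 1 /\ vnorm b = 1 /\ T *m b = s *: a /\ T^T *m a = s *: b.

Definition singular_value {R : realType} {m n : nat} (T : 'M[R]_(m, n)) (s : R) : Prop :=
  exists a b, singular_triple T s a b.

Definition top_singular_unique {R : realType} {m n : nat} (T : 'M[R]_(m, n))
  (rho : R) (a : 'cV[R]_m) (b : 'cV[R]_n) : Prop :=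
  singular_triple T rho a b /\
  (forall s, singular_value T s -> s <= rho) /\
  (forall a' b', singular_triple T rho a' b' ->
     (a' = a /\ b' = b) \/ (a' = - a /\ b' = - b)).

(* align((u,v);(us,vs)) ; Sx = Sigma_xx^{1/2}, Sy = Sigma_yy^{1/2} *)
Definition align {R : realType} {dx dy : nat}
  (Sxx Sx : 'M[R]_dx) (Syy Sy : 'M[R]_dy)
  (u us : 'cV[R]_dx) (v vs : 'cV[R]_dy) : R :=
  2^-1 * (bil u Sxx us / vnorm (Sx *m u) + bil v Syy vs / vnorm (Sy *m v)).

(* Main.v *)
Require Import Defs.
Set Warnings "-all".
From HB Require Import structures.
From mathcomp Require Import all_boot all_order all_algebra.
From mathcomp Require Import all_classical all_reals all_analysis.
From mathcomp Require Import lra ring.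
Set Implicit Arguments. Unset Strict Implicit. Unset Printing Implicit Defensive.
Import Order.TTheory GRing.Theory Num.Theory.
Import numFieldNormedType.Exports.
Local Open Scope classical_set_scope.
Local Open Scope ring_scope.

Definition qf {R : realType} {n : nat} (N : 'M[R]_n) (r : 'rV[R]_n) : R :=
  \sum_i \sum_j r ord0 i * N i j * r ord0 j.

Lemma qf_cont {R : realType} {n : nat} (N : 'M[R]_n) : continuous (qf N).
Proof.
rewrite /qf.
apply: (@continuous_big _ _ +%R 0 xpredT (@pseudometric_normed_Zmodule.add_continuous _ _)) => i _.
apply: (@continuous_big _ _ +%R 0 xpredT (@pseudometric_normed_Zmodule.add_continuous _ _)) => j _.
move=> x.
have h1 := @coord_continuous R 1 n ord0 i.
have h2 := @coord_continuous R 1 n ord0 j.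
have := continuousM (continuousM (h1 x) (@cst_continuous _ _ (N i j) x)) (h2 x).
by [].
Qed.

Lemma qf1 {R : realType} {n : nat} (r : 'rV[R]_n) :
  qf 1%:M r = \sum_i r ord0 i ^+ 2.
Proof.
rewrite /qf; apply: eq_bigr => i _.
rewrite (bigD1 i) //= big1 ?addr0; first by rewrite !mxE eqxx mulr1 expr2.
by move=> j /negbTE ji; rewrite !mxE eq_sym ji mulr0 mul0r.
Qed.

Lemma qf_max {R : realType} {n : nat} (N : 'M[R]_n) : (0 < n)%N ->
  exists c : 'rV[R]_n, qf 1%:M c = 1 /\
    forall r, qf 1%:M r = 1 -> qf N r <= qf N c.
Proof.
move=> n0.
pose A := [set v : 'rV[R]_n | forall i, `[(-1:R), 1]%classic (v ord0 i)] `&`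
   (qf 1%:M @^-1` [set x | x = 1]).
have cA : compact A.
  apply: compact_closedI.
    by apply: (@rV_compact R n (fun=> `[(-1:R), 1]%classic)) => i; exact: segment_compact.
  apply: preimage_closed; last exact: closed_eq.
  by move=> x _; exact: qf_cont.
have A0 : A !=set0.
  exists (\row_j (if j == Ordinal n0 then 1 else 0)); split.
    move=> i /=; rewrite mxE; case: ifP => _; rewrite in_itv /=; apply/andP; split; lra.
  rewrite /preimage /= qf1 (bigD1 (Ordinal n0)) //= big1 ?addr0; first by rewrite mxE eqxx expr1n.
  by move=> j /negbTE ji; rewrite mxE ji expr0n.
have [c cA' cmax] := compact_EVT_max A0 cA (continuous_subspaceT (@qf_cont R n N)).
move: cA'; rewrite inE => -[_ c1]; exists c; split => // r r1.
apply: cmax; rewrite inE; split => // i.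
have : r ord0 i ^+ 2 <= 1.
  rewrite -r1 qf1 (bigD1 i) //= lerDl; apply: sumr_ge0 => j _; exact: sqr_ge0.
move=> h; rewrite /= in_itv /=; apply/andP; split; nra.
Qed.

Section Dot.
Variable R : realType.

Definition dt {n} (x y : 'cV[R]_n) : R := (x^T *m y) 0 0.

Lemma dtE n (x y : 'cV[R]_n) : dt x y = \sum_i x i 0 * y i 0.
Proof. by rewrite /dt mxE; apply: eq_bigr => i _; rewrite mxE. Qed.

Lemma dtC n (x y : 'cV[R]_n) : dt x y = dt y x.
Proof. by rewrite !dtE; apply: eq_bigr => i _; rewrite mulrC. Qed.

Lemma dtDl n (x y z : 'cV[R]_n) : dt (x + y) z = dt x z + dt y z.
Proof. by rewrite !dtE -big_split; apply: eq_bigr => i _; rewrite !mxE mulrDl. Qed.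

Lemma dtDr n (x y z : 'cV[R]_n) : dt z (x + y) = dt z x + dt z y.
Proof. by rewrite dtC dtDl !(dtC z). Qed.

Lemma dtZl n a (x y : 'cV[R]_n) : dt (a *: x) y = a * dt x y.
Proof. by rewrite !dtE mulr_sumr; apply: eq_bigr => i _; rewrite !mxE mulrA. Qed.

Lemma dtZr n a (x y : 'cV[R]_n) : dt y (a *: x) = a * dt y x.
Proof. by rewrite dtC dtZl dtC. Qed.

Lemma dtNl n (x y : 'cV[R]_n) : dt (- x) y = - dt x y.
Proof. by rewrite -scaleN1r dtZl mulN1r. Qed.

Lemma dtNr n (x y : 'cV[R]_n) : dt y (- x) = - dt y x.
Proof. by rewrite dtC dtNl dtC. Qed.

Lemma dtBl n (x y z : 'cV[R]_n) : dt (x - y) z = dt x z - dt y z.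
Proof. by rewrite dtDl dtNl. Qed.

Lemma dtBr n (x y z : 'cV[R]_n) : dt z (x - y) = dt z x - dt z y.
Proof. by rewrite dtDr dtNr. Qed.

Lemma dtM m n (A : 'M[R]_(m, n)) x y : dt x (A *m y) = dt (A^T *m x) y.
Proof. by rewrite /dt trmx_mul trmxK mulmxA. Qed.

Lemma dt_ge0 n (x : 'cV[R]_n) : 0 <= dt x x.
Proof. by rewrite dtE; apply: sumr_ge0 => i _; rewrite -expr2 sqr_ge0. Qed.

Lemma dt_eq0 n (x : 'cV[R]_n) : dt x x = 0 -> x = 0.
Proof.
rewrite dtE => /eqP; rewrite psumr_eq0; last by move=> i _; rewrite -expr2 sqr_ge0.
move=> /allP h; apply/matrixP => i j; rewrite (ord1 j) !mxE.
have /h : i \in index_enum 'I_n by rewrite mem_index_enum.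
by rewrite /= mulf_eq0 orbb => /eqP.
Qed.

Lemma bilE m n (u : 'cV[R]_m) (A : 'M[R]_(m, n)) v : bil u A v = dt u (A *m v).
Proof. by rewrite /bil /dt mulmxA. Qed.

Lemma vnormE n (w : 'cV[R]_n) : vnorm w = Num.sqrt (dt w w).
Proof. by []. Qed.

Lemma qfE n (N : 'M[R]_n) (r : 'rV[R]_n) : qf N r = dt r^T (N *m r^T).
Proof.
rewrite /qf dtE; apply: eq_bigr => i _; rewrite !mxE mulr_sumr.
by apply: eq_bigr => j _; rewrite !mxE mulrA.
Qed.

End Dot.

Lemma quad_zero (R : realType) (b c : R) :
  (forall t, 2 * t * b + t ^+ 2 * c <= 0) -> c <= 0 -> 0 <= b -> b = 0.
Proof.
move=> H c0 b0.
have d0 : 0 < 1 - c by lra.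
set t := b / (1 - c).
have tb : t * (1 - c) = b by rewrite /t mulfVK // gt_eqF.
have h := H t.
have h2 : t ^+ 2 * (2 - c) <= 0.
  have -> : t ^+ 2 * (2 - c) = 2 * t * b + t ^+ 2 * c by rewrite -tb; ring.
  exact: h.
have : t ^+ 2 <= 0.
  have : 0 < 2 - c by lra.
  by move=> p; rewrite -(pmulr_lle0 _ p).
move=> h3; have /eqP : t ^+ 2 = 0 by apply/eqP; rewrite eq_le h3 sqr_ge0.
rewrite expf_eq0 /= => /eqP t0.
by rewrite -tb t0 mul0r.
Qed.

Lemma dt0r (R : realType) n (x : 'cV[R]_n) : dt x 0 = 0.
Proof. by rewrite /dt mulmx0 mxE. Qed.

Lemma opnorm (R : realType) m n (T : 'M[R]_(m, n)) rho :
  (0 < n)%N -> 0 <= rho -> (forall s, singular_value T s -> s <= rho) ->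
  forall y, dt (T *m y) (T *m y) <= rho ^+ 2 * dt y y.
Proof.
move=> n0 rho0 Hs.
set M := T^T *m T.
have MTT : forall y, dt y (M *m y) = dt (T *m y) (T *m y).
  by move=> y; rewrite /M -mulmxA dtM trmxK.
have Msym : forall x z, dt x (M *m z) = dt (M *m x) z.
  by move=> x z; rewrite dtM /M trmx_mul trmxK.
have [c [c1 cmax]] := qf_max M n0.
set y0 := c^T.
have y01 : dt y0 y0 = 1 by rewrite -c1 qfE mul1mx.
set lam := dt y0 (M *m y0).
have G1 : forall y, dt y (M *m y) <= lam * dt y y.
  move=> y; have := dt_ge0 y; rewrite le_eqVlt => /orP[/eqP/esym/dt_eq0 -> | dpos].
    by rewrite mulmx0 !dt0r mulr0.
  set k := (Num.sqrt (dt y y))^-1.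
  have k2 : k ^+ 2 * dt y y = 1.
    by rewrite /k exprVn sqr_sqrtr ?mulVf ?gt_eqF // ltW.
  have := cmax (k *: y^T).
  rewrite !qfE linearZ /= trmxK mul1mx dtZl dtZr mulrA -expr2 k2 => /(_ erefl).
  rewrite -!qfE -/y0 -/lam => h.
  rewrite -[X in X <= _]mul1r -k2 mulrAC.
  have -> : k ^+ 2 * dt y (M *m y) = qf M (k *: y^T).
    by rewrite qfE linearZ /= trmxK -scalemxAr dtZl dtZr mulrA -expr2.
  have -> : lam = qf M c by rewrite qfE.
  apply: ler_wpM2r; first exact: ltW.
  by rewrite qfE linearZ /= trmxK.
have lam0 : 0 <= lam by rewrite /lam MTT dt_ge0.
have Mev : M *m y0 = lam *: y0.
  set w := M *m y0 - lam *: y0.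
  have ww : dt w w = dt w (M *m y0) - lam * dt w y0 by rewrite {2}/w dtBr dtZr.
  have wdef : w = M *m y0 - lam *: y0 by [].
  clearbody w.
  have cneg : dt w (M *m w) - lam * dt w w <= 0 by rewrite subr_le0 G1.
  have : dt w w = 0.
    apply: (quad_zero _ cneg (dt_ge0 w)) => t.
    have := G1 (y0 + t *: w).
    rewrite mulmxDr -scalemxAr !dtDl !dtDr !dtZl !dtZr -/lam y01.
    rewrite (Msym y0 w) (dtC (M *m y0) w) (dtC w y0) ww => h.
    rewrite (dtC y0 w) -subr_le0 in h; apply: (le_trans _ h).
    rewrite le_eqVlt; apply/orP; left; apply/eqP; ring.
  by move/dt_eq0/eqP; rewrite wdef subr_eq0 => /eqP.
set s := Num.sqrt lam.
have s2 : s ^+ 2 = lam by rewrite sqr_sqrtr.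
have lamrho : lam <= rho ^+ 2.
  have [s0 | spos] : s = 0 \/ 0 < s.
    by have := sqrtr_ge0 lam; rewrite -/s le_eqVlt => /orP[/eqP/esym -> | ->]; [left | right].
    by rewrite -s2 s0 expr0n /= exprn_ge0.
  set x0 := s^-1 *: (T *m y0).
  have : singular_value T s.
    exists x0, y0; split; first exact: ltW.
    split.
      rewrite vnormE /x0 dtZl dtZr -MTT -/lam -s2 mulrA -expr2 exprVn mulVf ?sqrtr1 //.
      by rewrite expf_neq0 // gt_eqF.
    split; first by rewrite vnormE y01 sqrtr1.
    split; first by rewrite /x0 scalerA mulfV ?scale1r // gt_eqF.
    rewrite /x0 -scalemxAr mulmxA -/M Mev scalerA -s2 expr2 mulrA mulVf ?mul1r //.
    by rewrite gt_eqF.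
  move=> /Hs srho; rewrite -s2; nra.
move=> y; rewrite -MTT; apply: (le_trans (G1 y)); apply: ler_wpM2r => //; exact: dt_ge0.
Qed.

Lemma core (R : realType) m n (T : 'M[R]_(m, n)) rho (a : 'cV[R]_m) (b : 'cV[R]_n)
  (p : 'cV[R]_m) (q : 'cV[R]_n) eta :
  0 <= rho -> dt a a = 1 -> dt b b = 1 -> T *m b = rho *: a -> T^T *m a = rho *: b ->
  (forall y, dt (T *m y) (T *m y) <= rho ^+ 2 * dt y y) ->
  dt p p = 1 -> dt q q = 1 -> 0 < eta < 1 ->
  2 - eta / 4 <= dt p a + dt q b -> rho * (1 - eta) <= dt p (T *m q).
Proof.
move=> rho0 a1 b1 Tb Ta Hop p1 q1 /andP[e0 e1] hal.
set al := dt p a in hal *; set be := dt q b in hal *.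
set x := p - al *: a; set y := q - be *: b.
have hq : q = be *: b + y by rewrite /y addrC subrK.
have hp : p = al *: a + x by rewrite /x addrC subrK.
have by0 : dt b y = 0 by rewrite /y dtBr dtZr b1 mulr1 dtC subrr.
have ax0 : dt a x = 0 by rewrite /x dtBr dtZr a1 mulr1 dtC subrr.
clearbody x y.
have xx : dt x x = 1 - al ^+ 2.
  rewrite -p1 hp !dtDl !dtDr !dtZl !dtZr a1 (dtC x a) ax0; ring.
have yy : dt y y = 1 - be ^+ 2.
  rewrite -q1 hq !dtDl !dtDr !dtZl !dtZr b1 (dtC y b) by0; ring.
have al1 : al <= 1.
  have := dt_ge0 (p - a); rewrite !dtBl !dtBr p1 a1 (dtC a p) -/al; lra.
have be1 : be <= 1.
  have := dt_ge0 (q - b); rewrite !dtBl !dtBr q1 b1 (dtC b q) -/be; lra.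
have main : dt p (T *m q) = al * be * rho + dt x (T *m y).
  rewrite {1}hq mulmxDr -scalemxAr Tb dtDr dtZr dtZr -/al.
  rewrite hp dtDl dtZl dtM Ta dtZl by0; ring.
rewrite main.
set X := dt x (T *m y).
have Xb : 0 <= rho * (rho * (dt x x + dt y y) + 2 * X).
  have := dt_ge0 (rho *: x + T *m y).
  rewrite !dtDl !dtDr !dtZl !dtZr (dtC (T *m y) x) -/X.
  have := Hop y; nra.
have Xb2 : 0 <= rho * (2 - al ^+ 2 - be ^+ 2) + 2 * X.
  have [r0 | rpos] : rho = 0 \/ 0 < rho.
    by move: rho0; rewrite le_eqVlt => /orP[/eqP/esym -> | ->]; [left | right].
    have : dt (T *m y) (T *m y) = 0.
      apply/eqP; rewrite eq_le dt_ge0 andbT; have := Hop y; rewrite r0 expr0n /= mul0r //.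
    move/dt_eq0; rewrite /X => ->; rewrite dt0r r0; lra.
  have : 0 <= rho * (dt x x + dt y y) + 2 * X.
    by rewrite -(pmulr_rge0 _ rpos).
  rewrite xx yy; nra.
have S : 4 - 2 * eta <= (al + be) ^+ 2 by nra.
have P : 0 <= rho * ((al + be) ^+ 2 - (4 - 2 * eta)).
  by apply: mulr_ge0 => //; lra.
nra.
Qed.

Lemma cV_pos (R : realType) n (v : 'cV[R]_n) : v != 0 -> (0 < n)%N.
Proof. by case: n v => // v; rewrite flatmx0 eqxx. Qed.

Lemma posdef_unit (R : realType) n (S : 'M[R]_n) : posdef S -> S \in unitmx.
Proof.
move=> [Ssym Spos]; rewrite -row_free_unit -kermx_eq0.
apply/negPn/negP => /rowV0Pn [v /sub_kermxP vS v0].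
have w0 : v^T != 0 by apply: contra v0 => /eqP h; rewrite -(trmxK v) h linear0.
have := Spos _ w0; rewrite bilE.
have -> : S *m v^T = 0 by rewrite -{1}Ssym -trmx_mul vS linear0.
by rewrite dt0r ltxx.
Qed.

Lemma sqrt_eq1 (R : realType) (x : R) : 0 <= x -> Num.sqrt x = 1 -> x = 1.
Proof. by move=> x0 h; rewrite -(sqr_sqrtr x0) h expr1n. Qed.

Lemma normalize (R : realType) n (P : 'cV[R]_n) : 0 < dt P P ->
  dt ((Num.sqrt (dt P P))^-1 *: P) ((Num.sqrt (dt P P))^-1 *: P) = 1.
Proof.
move=> h; rewrite dtZl dtZr mulrA -expr2 exprVn sqr_sqrtr ?mulVf ?gt_eqF //; exact: ltW.
Qed.

Theorem lemma1 (R : realType) (dx dy : nat)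
  (Sxx : 'M[R]_dx) (Syy : 'M[R]_dy) (Sxy : 'M[R]_(dx, dy))
  (Sx : 'M[R]_dx) (Sy : 'M[R]_dy)
  (rho1 : R) (a1 : 'cV[R]_dx) (b1 : 'cV[R]_dy)
  (eta : R) (u : 'cV[R]_dx) (v : 'cV[R]_dy) :
  posdef Sxx -> posdef Syy ->
  possemidef (block_mx Sxx Sxy Sxy^T Syy) ->
  is_psd_sqrt Sxx Sx -> is_psd_sqrt Syy Sy ->
  top_singular_unique (invmx Sx *m Sxy *m invmx Sy) rho1 a1 b1 ->
  0 < eta < 1 -> u != 0 -> v != 0 ->
  align Sxx Sx Syy Sy u (invmx Sx *m a1) v (invmx Sy *m b1) >= 1 - eta / 8 ->
  bil u Sxy v / (Num.sqrt (bil u Sxx u) * Num.sqrt (bil v Syy v))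
    >= rho1 * (1 - eta).
Proof.
move=> [_ HSxx] [_ HSyy] _ [HSx SxSx] [HSy SySy] [[rho0 [na [nb [Tb Ta]]]] [Hmax _]]
  heta u0 v0 hal.
set T := invmx Sx *m Sxy *m invmx Sy in Tb Ta Hmax *.
have Sxu := posdef_unit HSx; have Syu := posdef_unit HSy.
have Sxt : Sx^T = Sx by case: HSx.
have Syt : Sy^T = Sy by case: HSy.
have Hop := opnorm (cV_pos v0) rho0 Hmax.
set P := Sx *m u; set Q := Sy *m v.
have e1 : bil u Sxx u = dt P P by rewrite bilE -SxSx -mulmxA dtM Sxt.
have e1' : bil v Syy v = dt Q Q by rewrite bilE -SySy -mulmxA dtM Syt.
have e2 : bil u Sxy v = dt P (T *m Q).
  rewrite /T /Q mulmxA -(mulmxA _ (invmx Sy)) mulVmx // mulmx1 -mulmxA dtM trmx_inv Sxt.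
  by rewrite /P mulmxA mulVmx // mul1mx bilE.
have e3 : bil u Sxx (invmx Sx *m a1) = dt P a1.
  by rewrite bilE -SxSx mulmxA -(mulmxA Sx) mulmxV // mulmx1 dtM Sxt.
have e3' : bil v Syy (invmx Sy *m b1) = dt Q b1.
  by rewrite bilE -SySy mulmxA -(mulmxA Sy) mulmxV // mulmx1 dtM Syt.
have Ppos : 0 < dt P P by rewrite -e1; exact: HSxx.
have Qpos : 0 < dt Q Q by rewrite -e1'; exact: HSyy.
move: hal; rewrite /align e3 e3' !vnormE -/P -/Q => hal.
rewrite e1 e1' e2.
set nP := Num.sqrt (dt P P); set nQ := Num.sqrt (dt Q Q).
have nP0 : 0 < nP by rewrite sqrtr_gt0.
have nQ0 : 0 < nQ by rewrite sqrtr_gt0.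
have a11 : dt a1 a1 = 1 by apply: sqrt_eq1 (dt_ge0 _) na.
have b11 : dt b1 b1 = 1 by apply: sqrt_eq1 (dt_ge0 _) nb.
have := core (p := nP^-1 *: P) (q := nQ^-1 *: Q) rho0 a11 b11 Tb Ta Hop
  (normalize Ppos) (normalize Qpos) heta.
rewrite !dtZl -scalemxAr dtZr.
have -> : dt P (T *m Q) / (nP * nQ) = nP^-1 * (nQ^-1 * dt P (T *m Q)).
  by rewrite invfM mulrC -mulrA.
apply.
move: hal; rewrite -[dt P a1 / nP]mulrC -[dt Q b1 / nQ]mulrC; lra.
Qed.
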